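(* Let $2\le t\le n$. Then for all $s\ge1$, $\mathrm{Ass}(S/I_t(L_n)^s)=\{\mathfrak p_F: F\in C_{n,t}\}$.
   Context: $K$ is a field, $S=K[x_1,\ldots,x_n]$, $I_t(L_n)=(u_1,\ldots,u_{n-t+1})$ with $u_i=x_ix_{i+1}\cdots x_{i+t-1}$, and $\mathfrak p_F=(x_i:i\in F)$. $C_{n,t}$ is the set of subsets $\{i_1<\cdots<i_r\}\subseteq[n]$ with: (1) $1\le i_1\le t$; (2) $i_2>t$; (3) $1\le i_{j+1}-i_j\le t$ for $1\le j\le r-1$; (4) $i_{j+2}-i_j>t$ for $1\le j\le r-2$; (5) $i_{r-1}<n-t+1$; (6) $n-t+1\le i_r\le n$ (conditions referring to nonexistent indices are vacuous). *)

(* Defs.v *)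
From HB Require Import structures.
From mathcomp Require Import all_boot all_order all_algebra.
From mathcomp.multinomials Require Import mpoly.

Set Implicit Arguments.
Unset Strict Implicit.
Unset Printing Implicit Defensive.

Import GRing.Theory.
Local Open Scope ring_scope.

Section Defs.
Variables (K : fieldType) (n : nat).
Local Notation S := {mpoly K[n]}.

(** The variable x_j of S = K[x_1,...,x_n] (1-based index j, 1 <= j <= n);
    out-of-range indices give 0 (never used for in-range statements). *)
Definition xvar (j : nat) : S :=
  match @insub nat (fun k => k < n)%N _ j.-1 with
  | Some o => 'X_(o : 'I_n)
  | None => 0
  end.

Definition ideal_gen (G : S -> Prop) : S -> Prop :=
  fun f => exists l : seq (S * S),
    (forall p, p \in l -> G p.2) /\ f = \sum_(p <- l) p.1 * p.2.

Definition ideal_mul (I J : S -> Prop) : S -> Prop :=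
  ideal_gen (fun h => exists a b, I a /\ J b /\ h = a * b).

Definition ideal_pow (I : S -> Prop) (s : nat) : S -> Prop :=
  iter s (ideal_mul I) (fun _ => True).

Definition is_prime_ideal (P : S -> Prop) : Prop :=
  [/\ P 0,
      (forall a b, P a -> P b -> P (a + b)),
      (forall a b, P b -> P (a * b)),
      ~ P 1 &
      (forall a b, P (a * b) -> P a \/ P b)].

Definition is_ass (J P : S -> Prop) : Prop :=
  is_prime_ideal P /\ exists f : S, forall g, P g <-> J (g * f).

Definition path_gen (t i : nat) : S := \prod_(i <= j < i + t) xvar j.

Definition path_ideal (t : nat) : S -> Prop :=
  ideal_gen (fun f => exists i, (1 <= i <= n - t + 1)%N /\ f = path_gen t i).

Definition prime_of (F : seq nat) : S -> Prop :=
  ideal_gen (fun f => exists i, i \in F /\ f = xvar i).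

End Defs.

Definition in_C (n t : nat) (F : seq nat) : Prop :=
  let r := size F in
  let i := fun j => nth 0%N F j.-1 in   (* i j = i_j, 1-based *)
  [/\ sorted ltn F, (forall k, k \in F -> 1 <= k <= n)%N & (1 <= r)%N] /\
  (1 <= i 1 <= t)%N /\
  (2 <= r -> t < i 2)%N /\
  (forall j, 1 <= j <= r - 1 -> 1 <= i j.+1 - i j <= t)%N /\
  (forall j, 1 <= j <= r - 2 -> t < i j.+2 - i j)%N /\
  (2 <= r -> i r.-1 < n - t + 1)%N /\
  (n - t + 1 <= i r <= n)%N.

(* Main.v *)
Require Import Defs.
From HB Require Import structures.
From mathcomp Require Import all_boot all_order all_algebra.
From mathcomp.multinomials Require Import mpoly.
From mathcomp Require Import zify.
From Stdlib Require Import Classical.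

Set Implicit Arguments.
Unset Strict Implicit.
Unset Printing Implicit Defensive.

Import GRing.Theory.


Definition inW (t i j : nat) : bool := (i <= j < i + t).
Definition validw (n t i : nat) : bool := (1 <= i <= n - t + 1).
Definition cover n t (G : pred nat) : Prop :=
  forall i, validw n t i -> exists j, G j /\ inW t i j.
Definition wtp n (G : pred nat) (a : nat -> nat) : nat :=
  \sum_(1 <= j < n.+1) (G j) * a j.
Definition domw n t s (a : nat -> nat) :=
  exists l : seq nat, size l = s /\ all (validw n t) l /\
    forall j, count (fun i => inW t i j) l <= a j.

Lemma wtp_le n (G H : pred nat) a b :
  (forall j, 1 <= j <= n -> G j * a j <= H j * b j) -> wtp n G a <= wtp n H b.
Proof.
move=> h; rewrite /wtp big_nat_cond [X in _ <= X]big_nat_cond.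
apply: leq_sum => j /andP[/andP[h1 h2] _]; apply: h; lia.
Qed.

Lemma greedy n t s (a : nat -> nat) : t <= n ->
  (forall G, cover n t G -> s <= wtp n G a) -> domw n t s a.
Proof.
move=> htn; elim: s a => [|s IH] a H.
  by exists [::].
pose feas i := validw n t i && all (fun j => 0 < a j) (iota i t).
have [hf|hnf] := boolP (has feas (iota 1 (n - t + 1))); last first.
  have cov : cover n t (fun j => a j == 0).
    move=> i vi; have : ~~ feas i.
      apply: contra hnf => fi; apply/hasP; exists i => //.
      rewrite mem_iota; move: vi; rewrite /validw; lia.
    rewrite /feas vi /= -has_predC => /hasP [j]; rewrite mem_iota /= -eqn0Ngt => hj aj.
    by exists j; split => //; rewrite /inW; lia.
  have := H _ cov; rewrite /wtp big1 // => j _.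
  by case: eqP => [->|]; rewrite ?muln0 ?mul0n.
have exf : exists i, feas i by case/hasP: hf => i _ fi; exists i.
pose i0 := ex_minn exf.
have fi0 : feas i0 by rewrite /i0; case: ex_minnP.
have mini0 : forall i, feas i -> i0 <= i by rewrite /i0; case: ex_minnP.
move: (fi0); rewrite /feas => /andP [vi0 /allP ai0].
have ai0' : forall j, inW t i0 j -> 0 < a j.
  by move=> j hj; apply: ai0; rewrite mem_iota; move: hj; rewrite /inW; lia.
have az : forall j, 1 <= j -> j == i0.-1 -> a j = 0.
  move=> j j1 /eqP ej; have : ~~ feas (i0.-1).
    apply/negP => /mini0; move: j1; rewrite ej; lia.
  rewrite /feas; have -> : validw n t i0.-1 by move: vi0 j1; rewrite /validw ej; lia.
  rewrite /= -has_predC => /hasP [k]; rewrite mem_iota /= -eqn0Ngt => hk /eqP ak.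
  have [kj|kj] := eqVneq k j; first by rewrite -kj.
  have : 0 < a k by apply: ai0'; move: hk kj j1; rewrite /inW ej; lia.
  by rewrite ak.
pose a' j := a j - inW t i0 j.
have [l [sl [vl cl]]] : domw n t s a'.
  apply: IH => G cG.
  have [hq|hnq] := boolP [exists j : 'I_(i0 + t), G j && inW t i0 j].
    have exq : exists q, (q < i0 + t) && (G q && inW t i0 q).
      by case/existsP: hq => q hq; exists q; rewrite ltn_ord.
    have bq : forall q, (q < i0 + t) && (G q && inW t i0 q) -> q <= i0 + t.
      by move=> q /andP[/ltnW].
    pose q := ex_maxn exq bq.
    have Pq : (q < i0 + t) && (G q && inW t i0 q) by rewrite /q; case: ex_maxnP.
    have maxq : forall j, G j -> inW t i0 j -> j <= q.
      move=> j gj wj; rewrite /q; case: ex_maxnP => q' _; apply.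
      by rewrite gj wj andbT; move: wj; rewrite /inW; lia.
    move: Pq => /andP [_ /andP [Gq Wq]].
    pose G' := fun j => (G j && ~~ inW t i0 j) || (j == q) || (j == i0.-1).
    have cG' : cover n t G'.
      move=> i vi; have [z [Gz Wz]] := cG i vi.
      have [wz|wz] := boolP (inW t i0 z); last first.
        by exists z; split => //; rewrite /G' Gz wz.
      have zq := maxq z Gz wz.
      have [wq|wq] := boolP (inW t i q).
        by exists q; split => //; rewrite /G' eqxx orbT.
      have [wi|wi] := boolP (inW t i i0.-1).
        by exists i0.-1; split => //; rewrite /G' eqxx !orbT.
      exfalso; move: vi wz Wz wq wi zq Wq; rewrite /validw /inW; lia.
    have := H _ cG'.
    have : wtp n G' a <= wtp n G a' + wtp n (pred1 q) (fun _ => 1).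
      rewrite /wtp -big_split /= big_nat_cond [X in _ <= X]big_nat_cond.
      apply: leq_sum => j /andP[/andP[j1 j2] _].
      rewrite /G' /a'.
      have [wj|wj] := boolP (inW t i0 j).
        have [jq|jq] := eqVneq j q.
          rewrite jq Gq /=; have := ai0' q Wq; lia.
        have [ji|ji] := eqVneq j i0.-1.
          by move: wj; rewrite ji /inW; lia.
        by rewrite andbF.
      rewrite andbT; have [ji|ji] := eqVneq j i0.-1.
        rewrite orbT (az j j1); last by apply/eqP. lia.
      have [jq|jq] := eqVneq j q; first by move: wj; rewrite jq Wq.
      rewrite orbF subn0 /=; case: (G j) => /=; lia.
    have : wtp n (pred1 q) (fun _ => 1) <= 1.
      rewrite /wtp; have [qr|qr] := boolP (1 <= q <= n).
        rewrite (big_cat_nat (n := q)) /=; [|lia|lia].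
        rewrite big_nat_cond big1 /=; last by move=> j /andP[/andP[_ h] _]; rewrite (ltn_eqF h).
        rewrite big_ltn; last by lia.
        rewrite eqxx big_nat_cond big1 //= => j /andP[/andP[h _] _].
        by rewrite eq_sym (ltn_eqF h).
      rewrite big_nat_cond big1 // => j /andP[/andP[h1 h2] _].
      case: (eqVneq j q) => [ejq|nejq]; last by rewrite /= (negbTE nejq).
      move: qr; rewrite -ejq; lia.
    lia.
  have : wtp n G a' = wtp n G a.
    rewrite /wtp; apply: eq_bigr => j _; rewrite /a'.
    case Gj: (G j) => //=; rewrite !mul1n.
    have : ~~ (G j && inW t i0 j).
      apply/negP => gw; move/negP: hnq; apply; apply/existsP.
      have jl : j < i0 + t by move/andP: gw => [_]; rewrite /inW; lia.
      by exists (Ordinal jl).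
    by rewrite Gj /= => /negbTE ->; rewrite subn0.
  have := H _ cG; lia.
exists (i0 :: l); split; first by rewrite /= sl.
split; first by rewrite /= vi0 vl.
move=> j /=; have := cl j; rewrite /a'.
case wj: (inW t i0 j) => /=; last by rewrite subn0.
have := ai0' j wj; lia.
Qed.


Definition inCp n t (F : seq nat) : Prop :=
  [/\ sorted ltn F, (forall k, k \in F -> 1 <= k <= n), 0 < size F,
   (1 <= nth 0 F 0 <= t) & (1 < size F -> t < nth 0 F 1)] /\
  [/\ (forall k, k.+1 < size F -> nth 0 F k.+1 - nth 0 F k <= t),
   (forall k, k.+2 < size F -> t < nth 0 F k.+2 - nth 0 F k),
   (1 < size F -> nth 0 F (size F).-2 < n - t + 1) &
   (n - t + 1 <= nth 0 F (size F).-1 <= n)].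

Lemma nth_ltn (F : seq nat) k l : sorted ltn F -> k < l -> l < size F ->
  nth 0 F k < nth 0 F l.
Proof.
move=> sF kl ls; apply: (sorted_ltn_nth ltn_trans) => //; rewrite inE //; lia.
Qed.

Lemma nth_leq (F : seq nat) k l : sorted ltn F -> k <= l -> l < size F ->
  nth 0 F k <= nth 0 F l.
Proof.
move=> sF; rewrite leq_eqVlt => /orP[/eqP->//|kl] ls.
by apply: ltnW; apply: nth_ltn.
Qed.

Lemma inCE n t F : in_C n t F <-> inCp n t F.
Proof.
rewrite /in_C /inCp /=; split.
  move=> [[sF rF szF] [h1 [h2 [h3 [h4 [h5 h6]]]]]].
  split; split => //.
  - move=> k hk; have : 1 <= k.+1 <= size F - 1 by lia.
    by move/h3/andP => [].
  - move=> k hk; have : 1 <= k.+1 <= size F - 2 by lia.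
    by move/h4.
move=> [[sF rF szF h1 h2] [h3 h4 h5 h6]].
split; first by [].
split => //; split => //; split.
  move=> [|j] hj; first lia.
  rewrite /=; have := h3 j; have := @nth_ltn F j j.+1 sF (ltnSn _); lia.
split; last by [].
move=> [|j] hj; first lia.
have := h4 j; rewrite /=; apply; lia.
Qed.

Definition mincov n t (H : pred nat) :=
  cover n t H /\ forall x, H x -> ~ cover n t (fun j => H j && (j != x)).

Lemma count_split (H : pred nat) x s :
  count H s = count (fun j => H j && (j != x)) s + count (fun j => H j && (j == x)) s.
Proof.
elim: s => //= y s ->; case: (H y) => /=; case: (y == x) => /=; lia.
Qed.

Lemma mincov_ex n t (G : pred nat) : t <= n -> cover n t G ->
  exists H : pred nat, (forall j, H j -> G j /\ 1 <= j <= n) /\ mincov n t H.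
Proof.
move=> tn cG.
pose G1 := fun j => G j && (1 <= j <= n).
have cG1 : cover n t G1.
  move=> i vi; have [j [gj wj]] := cG i vi; exists j; split => //.
  by rewrite /G1 gj /=; move: vi wj; rewrite /validw /inW; lia.
suff : forall k (H : pred nat), count H (iota 1 n) <= k ->
    (forall j, H j -> G j /\ 1 <= j <= n) -> cover n t H ->
    exists H' : pred nat, (forall j, H' j -> G j /\ 1 <= j <= n) /\ mincov n t H'.
  move=> h; apply: (h (count G1 (iota 1 n)) G1) => // j /andP[gj jr]; by [].
elim => [|k IH] H cH sH covH.
  exfalso; have v1 : validw n t 1 by rewrite /validw; lia.
  have [j [hj wj]] := covH 1 v1.
  have [_ jr] := sH j hj.
  have : 0 < count H (iota 1 n); last by lia.
  rewrite -has_count.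
  by apply/hasP; exists j => //; rewrite mem_iota; lia.
have [[x [hx cx]]|nx] := classic (exists x, H x /\ cover n t (fun j => H j && (j != x))).
  apply: (IH (fun j => H j && (j != x))) => //.
  - have := count_split H x (iota 1 n).
    have : 0 < count (fun j => H j && (j == x)) (iota 1 n).
      rewrite -has_count; apply/hasP; exists x; rewrite ?hx ?eqxx //.
      by rewrite mem_iota; have := sH x hx; lia.
    lia.
  - by move=> j /andP[hj _]; apply: sH.
exists H; split => //; split => // y hy cy; apply: nx; by exists y.
Qed.

Lemma ltn_nthE (F : seq nat) m k : sorted ltn F -> m < size F -> k < size F ->
  (nth 0 F m < nth 0 F k) = (m < k).
Proof.
move=> sF ms ks; case: (ltnP m k) => h; first exact: nth_ltn.
by apply/negbTE; rewrite -leqNgt; apply: nth_leq.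
Qed.

Lemma leq_nthE (F : seq nat) m k : sorted ltn F -> m < size F -> k < size F ->
  (nth 0 F m <= nth 0 F k) = (m <= k).
Proof.
by move=> sF ms ks; rewrite leqNgt ltn_nthE // -leqNgt.
Qed.

Lemma rem_cover n t (H : pred nat) x : cover n t H ->
  (forall i, validw n t i -> inW t i x -> exists y, H y /\ y != x /\ inW t i y) ->
  cover n t (fun j => H j && (j != x)).
Proof.
move=> cH hx i vi; have [z [hz wz]] := cH i vi.
have [zx|zx] := eqVneq z x.
  have [y [hy [yx wy]]] := hx i vi (eq_ind z (inW t i) wz x zx).
  by exists y; rewrite hy yx.
by exists z; rewrite hz zx.
Qed.

Lemma mincov_inC n t (H : pred nat) : 1 <= t <= n ->
  (forall j, H j -> 1 <= j <= n) -> mincov n t H ->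
  inCp n t (filter H (iota 1 n)).
Proof.
move=> tn rH [cH mH].
set F := filter H (iota 1 n).
have memF : forall j, (j \in F) = H j.
  move=> j; rewrite mem_filter mem_iota; case hj: (H j) => //=.
  have := rH j hj; lia.
have sF : sorted ltn F by apply: sorted_filter; [exact: ltn_trans| exact: iota_ltn_sorted].
have cF : forall i, validw n t i -> exists2 k, k < size F & inW t i (nth 0 F k).
  move=> i vi; have [z [hz wz]] := cH i vi.
  rewrite -memF in hz; case/(nthP 0): hz => k ks ek.
  by exists k; rewrite // ek.
have nF : forall k, k < size F -> H (nth 0 F k).
  by move=> k ks; rewrite -memF mem_nth.
have rF : forall k, k < size F -> 1 <= nth 0 F k <= n.
  by move=> k ks; apply: rH; apply: nF.
have noRem : forall k, k < size F ->
   (forall i, validw n t i -> inW t i (nth 0 F k) ->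
      exists2 l, l < size F & (l != k) && inW t i (nth 0 F l)) -> False.
  move=> k ks hk; apply: (mH (nth 0 F k) (nF k ks)); apply: rem_cover => //.
  move=> i vi wi; have [l ls /andP[lk wl]] := hk i vi wi.
  exists (nth 0 F l); split; first exact: nF.
  split => //; apply/negP => /eqP e.
  by move: lk; rewrite -(nth_uniq 0 ls ks (sorted_uniq ltn_trans ltnn sF)) e eqxx.
have v1 : validw n t 1 by rewrite /validw; lia.
have vl : validw n t (n - t + 1) by rewrite /validw; lia.
have szF : 0 < size F by case: (cF 1 v1) => k ks _; lia.
split; split => //.
- by move=> k; rewrite memF; apply: rH.
- have [k ks wk] := cF 1 v1; have := @leq_nthE F (0) (k) sF szF ks; rewrite leq0n.
  have := rF 0 szF; move: wk; rewrite /inW; lia.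
- move=> s2; rewrite ltnNge; apply/negP => h.
  apply: (noRem 0 szF) => i vi wi; exists 1 => //.
  have := @ltn_nthE F (0) (1) sF szF s2; move: vi wi h; rewrite /validw /inW /=; lia.
- move=> k ks; rewrite leqNgt; apply/negP => h.
  have vk : validw n t (nth 0 F k).+1.
    have := rF _ ks; have := rF k (ltnW ks); rewrite /validw; lia.
  have [l ls wl] := cF _ vk.
  have := @ltn_nthE F (k) (l) sF (ltnW ks) ls; have := @ltn_nthE F (l) (k.+1) sF ls ks.
  move: wl h; rewrite /inW; lia.
- move=> k ks; rewrite ltnNge; apply/negP => h.
  apply: (noRem k.+1 (ltnW ks)) => i vi wi.
  have [ik|ik] := leqP i (nth 0 F k).
    exists k; first lia.
    have := @ltn_nthE F (k) (k.+1) sF (ltnW (ltnW ks)) (ltnW ks).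
    move: wi ik; rewrite /inW; rewrite (_ : (k != k.+1) = true); last lia.
    rewrite ltnSn /=; lia.
  exists k.+2 => //.
  have := @ltn_nthE F (k.+1) (k.+2) sF (ltnW ks) ks.
  move: wi ik h; rewrite /inW; rewrite (_ : (k.+2 != k.+1) = true); last lia.
  rewrite ltnSn /=; lia.
- move=> s2; rewrite ltnNge; apply/negP => h.
  have ks : (size F).-1 < size F by lia.
  apply: (noRem _ ks) => i vi wi.
  exists (size F).-2; first lia.
  have := @ltn_nthE F ((size F).-2) ((size F).-1) sF (ltac:(lia)) ks.
  move: wi vi h; rewrite /inW /validw; rewrite (_ : ((size F).-2 != (size F).-1) = true); last lia.
  have -> : (size F).-2 < (size F).-1 by lia.
  move=> /= ? ? ? ?; lia.
- have ks : (size F).-1 < size F by lia.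
  have [l ls wl] := cF _ vl.
  have := @leq_nthE F (l) ((size F).-1) sF ls ks; have := rF _ ks.
  move: wl; rewrite /inW; have -> : l <= (size F).-1 by lia.
  lia.
Qed.

Lemma inC_cover n t F : 1 <= t -> inCp n t F -> cover n t (mem F).
Proof.
move=> t1 [[sF rF szF h1 h2] [h3 h4 h5 h6]] i vi.
have [i0|i0] := leqP i (nth 0 F 0).
  exists (nth 0 F 0); split; first exact: mem_nth.
  by move: vi h1 i0; rewrite /validw /inW; lia.
pose P k := (k < size F) && (nth 0 F k < i).
have ex : exists k, P k by exists 0; rewrite /P szF.
have bd : forall k, P k -> k <= size F by move=> k /andP[/ltnW].
pose k := ex_maxn ex bd.
have Pk : P k by rewrite /k; case: ex_maxnP.
have mk : forall j, P j -> j <= k by rewrite /k; case: ex_maxnP.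
move: Pk => /andP [ks ki].
have [k1|k1] := ltnP k.+1 (size F).
  have : ~~ P k.+1 by apply/negP => /mk; lia.
  rewrite /P k1 /= -leqNgt => ik.
  exists (nth 0 F k.+1); split; first exact: mem_nth.
  have := h3 k k1; move: ik ki; rewrite /inW; lia.
exfalso; have e : k = (size F).-1 by lia.
move: h6 vi ki; rewrite /validw e; lia.
Qed.

Lemma inC_private n t F : inCp n t F -> forall k, k < size F ->
  exists2 i, validw n t i & inW t i (nth 0 F k) /\
    forall l, l < size F -> inW t i (nth 0 F l) -> l = k.
Proof.
move=> [[sF rF szF h1 h2] [h3 h4 h5 h6]] [|k] ks.
  exists 1; first by rewrite /validw; lia.
  split; first by move: h1; rewrite /inW; lia.
  move=> [//|l] ls; rewrite /inW => w; exfalso.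
  have s2 : 1 < size F by lia.
  have := h2 s2; have := @leq_nthE F 1 l.+1 sF s2 ls.
  case: l ls w s2 => [|l] ls w s2 /=; lia.
exists (nth 0 F k).+1.
  have s2 : 1 < size F by lia.
  have := h5 s2; have := @leq_nthE F k (size F).-2 sF (ltac:(lia)) (ltac:(lia)).
  rewrite /validw; have -> : k <= (size F).-2 by lia.
  lia.
split; first by have := h3 k ks; have := @ltn_nthE F k k.+1 sF (ltac:(lia)) ks; rewrite /inW ltnSn; lia.
move=> l ls; rewrite /inW => w.
have [lk|lk] := ltnP l k.+1.
  have := @leq_nthE F l k sF ls (ltac:(lia)); move: w; have -> : l <= k by lia.
  lia.
have [e|ne] := eqVneq l k.+1; first by [].
exfalso.
have := h4 k (ltac:(lia)); have := @leq_nthE F k.+2 l sF (ltac:(lia)) ls.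
move: w; have -> : k.+2 <= l by lia.
lia.
Qed.

Lemma inC_unique n t F G : 1 <= t -> inCp n t F -> inCp n t G ->
  {subset G <= F} -> G = F.
Proof.
move=> t1 hF hG sub.
have cG := inC_cover t1 hG.
move: (hF) (hG) => [[sF _ _ _ _] _] [[sG _ _ _ _] _].
apply: (irr_sorted_eq ltn_trans ltnn) => // x; apply/idP/idP; first exact: sub.
case/(nthP 0) => k ks <-.
have [i vi [wi pi]] := inC_private hF ks.
have [z [zG wz]] := cG i vi.
have := sub z zG; case/(nthP 0) => l ls ez.
have := pi l ls; rewrite ez => /(_ wz) elk.
by rewrite -ez elk in zG.
Qed.

Lemma sum_count (P : pred nat) (l : seq nat) : \sum_(i <- l) (P i : nat) = count P l.
Proof. by elim: l => [|x l IH]; rewrite ?big_nil ?big_cons ?IH. Qed.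

Lemma main_comb n t s (a : nat -> nat) : 1 <= t <= n ->
  domw n t s a <-> forall F, in_C n t F -> s <= wtp n (mem F) a.
Proof.
move=> tn; split.
  move=> [l [sl [vl cl]]] F /inCE hF.
  have t1 : 1 <= t by lia.
  have cF := inC_cover t1 hF.
  move: (hF) => [[_ rF _ _ _] _].
  rewrite -sl -sum1_size.
  apply: (@leq_trans (\sum_(i <- l) \sum_(1 <= j < n.+1) ((j \in F) * inW t i j))).
    rewrite big_seq [X in _ <= X]big_seq; apply: leq_sum => i il.
    have vi : validw n t i by move/allP: vl; apply.
    have [j [jF wj]] := cF i vi.
    have jr := rF j jF.
    rewrite (big_cat_nat (n := j)) /=; [|lia|lia].
    rewrite (@big_ltn _ _ _ j); last by lia.
    rewrite (_ : (j \in F) * inW t i j = 1); first by rewrite addnCA leq_addr.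
    have jF2 : j \in F by exact: jF.
    by rewrite jF2 wj.
  rewrite exchange_big /wtp; apply: leq_sum => j _.
  rewrite -big_distrr /= leq_mul2l sum_count.
  by apply/orP; right; apply: cl.
move=> H; apply: greedy; first lia.
move=> G cG.
have tn2 : t <= n by lia.
have [H' [sH' mH']] := mincov_ex tn2 cG.
have hF := mincov_inC tn (fun j hj => (sH' j hj).2) mH'.
have := H _ (proj2 (inCE _ _ _) hF) => h; apply: (leq_trans h).
apply: wtp_le => j jr; rewrite /= mem_filter mem_iota.
case hj: (H' j) => //=; rewrite (sH' j hj).1.
case: (_ && _) => /=; lia.
Qed.



Section Alg.
Variables (K : fieldType) (n : nat).
Local Open Scope ring_scope.
Local Notation S := {mpoly K[n]}.
Local Notation mon := 'X_{1..n}.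

Definition monob (D : pred mon) (f : S) : bool := all D (msupp f).
Definition monop (D : mon -> Prop) (f : S) : Prop := forall m, m \in msupp f -> D m.

Lemma monop0 D : monop D 0.
Proof. by move=> m; rewrite msupp0. Qed.

Lemma monopD D f g : monop D f -> monop D g -> monop D (f + g).
Proof.
move=> hf hg m /msuppD_le; rewrite mem_cat => /orP[]; [exact: hf|exact: hg].
Qed.

Lemma monopM D f g : (forall m1 m2, D m2 -> D (m1 + m2)%MM) -> monop D g -> monop D (f * g).
Proof.
move=> up hg m /msuppM_le /allpairsP [[m1 m2] /= [_ h2 ->]].
by apply: up; apply: hg.
Qed.

Lemma monopX D m : D m -> monop D 'X_[m].
Proof. by move=> h m'; rewrite msuppX inE => /eqP ->. Qed.

Lemma monopE (D : pred mon) f : monop D f <-> monob D f.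
Proof. by split => [h|/allP h //]; apply/allP. Qed.

Lemma ig0 (G : S -> Prop) : ideal_gen G 0.
Proof. by exists [::]; rewrite big_nil. Qed.

Lemma igD (G : S -> Prop) f g : ideal_gen G f -> ideal_gen G g -> ideal_gen G (f + g).
Proof.
move=> [l1 [h1 ->]] [l2 [h2 ->]]; exists (l1 ++ l2); split; last by rewrite big_cat.
by move=> p; rewrite mem_cat => /orP[/h1|/h2].
Qed.

Lemma igM (G : S -> Prop) h f : ideal_gen G f -> ideal_gen G (h * f).
Proof.
move=> [l [hl ->]]; exists [seq (h * p.1, p.2) | p <- l]; split.
  move=> p /mapP [q ql ->] /=; exact: hl.
by rewrite big_map mulr_sumr; apply: eq_bigr => p _; rewrite mulrA.
Qed.

Lemma igG (G : S -> Prop) g : G g -> ideal_gen G g.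
Proof.
by move=> hg; exists [:: (1, g)]; split; [move=> p; rewrite inE => /eqP -> | rewrite big_seq1 mul1r].
Qed.

Lemma ig_sub (G P : S -> Prop) : P 0 -> (forall a b, P a -> P b -> P (a + b)) ->
  (forall a b, P b -> P (a * b)) -> (forall g, G g -> P g) ->
  forall f, ideal_gen G f -> P f.
Proof.
move=> P0 PD PM PG f [l [hl ->]]; elim: l hl => [|p l IH] hl; first by rewrite big_nil.
rewrite big_cons; apply: PD; first by apply: PM; apply: PG; apply: hl; rewrite inE eqxx.
by apply: IH => q ql; apply: hl; rewrite inE ql orbT.
Qed.

Lemma ig_monop (G : S -> Prop) D : (forall m1 m2, D m2 -> D (m1 + m2)%MM) ->
  (forall g, G g -> monop D g) -> forall f, ideal_gen G f -> monop D f.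
Proof.
move=> up hG; apply: ig_sub => //; [exact: monop0| exact: monopD|].
by move=> a b; apply: monopM.
Qed.

Lemma monop_ig (G : S -> Prop) D : (forall m, D m -> ideal_gen G 'X_[m]) ->
  forall f, monop D f -> ideal_gen G f.
Proof.
move=> hX f hf; rewrite /monop in hf; rewrite (mpolyE f).
elim: (msupp f) hf => [|m l IH] hf; first by rewrite big_nil; apply: ig0.
rewrite big_cons; apply: igD; last by apply: IH => m' hm'; apply: hf; rewrite inE hm' orbT.
rewrite -mul_mpolyC; apply: igM; apply: hX; apply: hf; by rewrite inE eqxx.
Qed.


Local Open Scope nat_scope.
Definition expo (m : mon) (j : nat) : nat := \sum_(k < n | k.+1 == j) m k.

Lemma expoS m (k : 'I_n) : expo m k.+1 = m k.
Proof. by rewrite /expo (big_pred1 k) // => i; rewrite eqSS. Qed.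

Lemma expo_out m j : (j == 0) || (n < j) -> expo m j = 0.
Proof.
move=> hj; rewrite /expo big_pred0 // => i; apply/negbTE; apply/eqP => e.
move: hj (ltn_ord i); rewrite -e; lia.
Qed.

Lemma expoD m1 m2 j : expo (m1 + m2)%MM j = expo m1 j + expo m2 j.
Proof. by rewrite /expo -big_split; apply: eq_bigr => i _; rewrite mnmDE. Qed.

Lemma expo_le m1 m2 j : (m1 <= m2)%MM -> expo m1 j <= expo m2 j.
Proof. by move/mnm_lepP => h; apply: leq_sum => i _; apply: h. Qed.

Variable t : nat.
Hypothesis tn : 1 <= t <= n.

Definition wmon i : mon := [multinom (inW t i k.+1 : nat) | k < n].
Definition sigw (l : seq nat) : mon := (\sum_(i <- l) wmon i)%MM.

Lemma sigE l (k : 'I_n) : sigw l k = count (fun i => inW t i k.+1) l.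
Proof.
rewrite /sigw mnm_sumE -sum_count; apply: eq_bigr => i _; by rewrite mnmE.
Qed.

Lemma expo_sig l j : all (validw n t) l -> expo (sigw l) j = count (fun i => inW t i j) l.
Proof.
move=> vl; have [jr|jr] := boolP ((j == 0) || (n < j)).
  rewrite expo_out //; apply/eqP; rewrite eq_sym -leqn0 leqNgt -has_count.
  apply/hasPn => i il /=.
  have := allP vl i il; move: jr; rewrite /validw /inW; lia.
have jk : j.-1 < n by lia.
have -> : j = (Ordinal jk).+1 by rewrite /=; lia.
by rewrite expoS sigE.
Qed.

Definition Dom s (m : mon) : Prop := domw n t s (expo m).

Lemma DomE s m : Dom s m <-> exists l, size l = s /\ all (validw n t) l /\ (sigw l <= m)%MM.
Proof.
split.
  move=> [l [sl [vl cl]]]; exists l; split => //; split => //.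
  apply/mnm_lepP => k; rewrite sigE -(expoS m); exact: cl.
move=> [l [sl [vl le]]]; exists l; split => //; split => // j.
by rewrite -expo_sig //; apply: expo_le.
Qed.

Lemma sig_cat l1 l2 : sigw (l1 ++ l2) = (sigw l1 + sigw l2)%MM.
Proof. by rewrite /sigw big_cat. Qed.

Lemma Dom_add s1 s2 m1 m2 : Dom s1 m1 -> Dom s2 m2 -> Dom (s1 + s2) (m1 + m2)%MM.
Proof.
move=> /DomE [l1 [s1l [v1 le1]]] /DomE [l2 [s2l [v2 le2]]]; apply/DomE.
exists (l1 ++ l2); rewrite size_cat s1l s2l all_cat v1 v2 sig_cat; split => //; split => //.
apply/mnm_lepP => k; rewrite !mnmDE; apply: leq_add; by apply/mnm_lepP.
Qed.

Lemma Dom_up s m1 m2 : Dom s m2 -> Dom s (m1 + m2)%MM.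
Proof.
move=> /DomE [l [sl [vl le]]]; apply/DomE; exists l; split => //; split => //.
by apply: lepm_trans le _; rewrite addmC; apply: lem_addr.
Qed.

Lemma Dom0 m : Dom 0 m.
Proof. by exists [::]. Qed.


Lemma xvarE (k : 'I_n) : @xvar K n k.+1 = 'X_k.
Proof.
rewrite /xvar /= insubT /=; first exact: ltn_ord.
by move=> h; congr (mpolyX _ (mnm1 _)); apply: val_inj.
Qed.

Lemma xvar_out j : n < j -> @xvar K n j = 0%R.
Proof.
move=> h; rewrite /xvar insubF //; apply/negbTE; lia.
Qed.

Lemma prod_xvar a b : 1 <= a -> a <= b -> b <= n.+1 ->
  (\prod_(a <= j < b) @xvar K n j)%R = 'X_[[multinom ((a <= k.+1 < b) : nat) | k < n]].
Proof.
move=> a1; elim: b => [|b IH] ab bn.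
  by move: a1 ab; lia.
have [e|ab'] := eqVneq a b.+1.
  rewrite e big_geq // -mpolyX0; congr mpolyX; apply/mnmP => k.
  rewrite mnmE mnm0E; have -> : (b < k.+1 < b.+1) = false by apply/negP; lia.
  by [].
have ab2 : a <= b by lia.
rewrite big_nat_recr //= IH //; last by lia.
have bk : b.-1 < n by lia.
have -> : b = (Ordinal bk).+1 by rewrite /=; lia.
rewrite xvarE -mpolyXD; congr mpolyX; apply/mnmP => k.
rewrite mnmDE !mnmE /=.
have [ek|nk] := eqVneq (Ordinal bk) k.
  rewrite -ek /=.
  have -> : (a <= b.-1.+1 < b.-1.+1) = false by apply/negP; lia.
  have -> : (a <= b.-1.+1 < b.-1.+2) = true by apply/andP; split; lia.
  by [].
have nk' : (k : nat) != b.-1 by apply/eqP => e; move/eqP: nk; apply; apply: val_inj.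
rewrite addn0; congr (nat_of_bool _).
by apply/andP/andP => -[h1 h2]; split => //; lia.
Qed.

Lemma path_genE i : validw n t i -> @path_gen K n t i = 'X_[wmon i].
Proof.
move=> vi; rewrite /path_gen prod_xvar; [|move: vi; rewrite /validw; lia..].
by [].
Qed.


Lemma Dom_sig l : all (validw n t) l -> Dom (size l) (sigw l).
Proof. by move=> vl; apply/DomE; exists l; split => //; split => //; apply: lepm_refl. Qed.

Lemma path_monop f : @path_ideal K n t f -> monop (Dom 1) f.
Proof.
apply: ig_monop; first by move=> m1 m2; apply: Dom_up.
move=> g [i [vi ->]]; rewrite path_genE //; apply: monopX.
have := @Dom_sig [:: i]; rewrite /sigw big_seq1 /=; apply; rewrite andbT; exact: vi.
Qed.

Lemma pow_char s f : ideal_pow (@path_ideal K n t) s f <-> monop (Dom s) f.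
Proof.
elim: s f => [|s IH] f.
  by split => // _ m _; apply: Dom0.
have -> : ideal_pow (@path_ideal K n t) s.+1 =
  ideal_mul (@path_ideal K n t) (ideal_pow (@path_ideal K n t) s) by [].
split.
  apply: ig_monop; first by move=> m1 m2; apply: Dom_up.
  move=> g [a [b [ha [hb ->]]]] m /msuppM_le /allpairsP [[m1 m2] /= [h1 h2 ->]].
  have := Dom_add (path_monop ha h1) ((proj1 (IH b) hb) m2 h2); by [].
apply: monop_ig => m /DomE [[|i l] [sl [vl le]]] //.
move: sl => [sl]; move: vl => /= /andP [vi vl].
rewrite -(submK le) mpolyXD; apply: igM; apply: igG.
exists 'X_[wmon i], 'X_[sigw l]; split.
  by apply: igG; exists i; split; [exact: vi| rewrite path_genE].
split; last by rewrite -mpolyXD /sigw big_cons.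
apply/IH; apply: monopX; rewrite -sl; exact: Dom_sig.
Qed.


Definition degF (F : seq nat) (m : mon) : nat := \sum_(k < n | k.+1 \in F) m k.

Lemma degFD F m1 m2 : degF F (m1 + m2)%MM = degF F m1 + degF F m2.
Proof. by rewrite /degF -big_split; apply: eq_bigr => i _; rewrite mnmDE. Qed.

Lemma wtp_expo F m : wtp n (mem F) (expo m) = degF F m.
Proof.
rewrite /wtp big_add1 /= big_mkord /degF [RHS]big_mkcond /=; apply: eq_bigr => i _.
by rewrite expoS; case: (_ \in _); rewrite ?mul1n ?mul0n.
Qed.

Definition QF F s (f : S) := monob (fun m => s <= degF F m) f.

Lemma J_char s f : ideal_pow (@path_ideal K n t) s f <->
  forall F, in_C n t F -> QF F s f.
Proof.
rewrite pow_char; split.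
  move=> h F hF; apply/allP => m hm; rewrite -wtp_expo.
  exact: (proj1 (main_comb s (expo m) tn) (h m hm)).
move=> h m hm; apply/(main_comb s (expo m) tn) => F hF.
by rewrite wtp_expo; move/allP: (h F hF); apply.
Qed.

Lemma degFU F (k : 'I_n) : k.+1 \in F -> degF F U_(k)%MM = 1.
Proof.
move=> hk; rewrite /degF (bigD1 k) //= mnm1E eqxx big1 // => i /andP[_ ik].
by rewrite mnm1E eq_sym (negbTE ik).
Qed.

Lemma prime_char F g : (forall k, k \in F -> 1 <= k <= n) ->
  @prime_of K n F g <-> QF F 1 g.
Proof.
move=> rF; rewrite /QF -monopE; split.
  apply: ig_monop; first by move=> m1 m2; rewrite degFD; lia.
  move=> h [i [iF ->]]; have ir := rF i iF.
  have ik : i.-1 < n by lia.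
  have -> : i = (Ordinal ik).+1 by rewrite /=; lia.
  rewrite xvarE; apply: monopX; rewrite degFU //.
  by rewrite /=; have -> : i.-1.+1 = i by lia.
apply: monop_ig => m hm.
have [k /andP [kF mk]] : exists k : 'I_n, (k.+1 \in F) && (0 < m k).
  case: (boolP [exists k : 'I_n, (k.+1 \in F) && (0 < m k)]) => [/existsP //|]; rewrite negb_exists => /forallP hn; move: hm.
  rewrite /degF big1 // => i iF; have := hn i; rewrite iF /=; lia.
have le : (U_(k) <= m)%MM by rewrite lep1mP; lia.
rewrite -(submK le) mpolyXD; apply: igM; apply: igG.
by exists k.+1; split => //; rewrite xvarE.
Qed.


Definition hth (F : seq nat) : 'I_n -> {poly S} :=
  fun i => (('X_i)%:P * 'X ^+ (i.+1 \in F))%R.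
Definition theta F : S -> {poly S} := mmap (polyC \o @mpolyC n K) (hth F).

Lemma thetaM F : {morph theta F : x y / (x * y)%R}.
Proof. by move=> x y; rewrite /theta rmorphM. Qed.

Lemma theta_X F m : theta F 'X_[m] = (('X_[m])%:P * 'X^(degF F m))%R.
Proof.
rewrite /theta mmapX /mmap1 /hth.
under eq_bigr do rewrite exprMn -exprM.
rewrite big_split /= prodrXr.
under eq_bigr do rewrite -rmorphXn.
rewrite -rmorph_prod /= -mpolyXE_id; congr (_ * 'X^_)%R.
by rewrite /degF [RHS]big_mkcond /=; apply: eq_bigr => i _; case: (_ \in _); rewrite ?mul1n ?mul0n.
Qed.

Lemma theta_E F p : theta F p =
  (\sum_(m <- msupp p) (p@_m *: 'X_[m])%:P * 'X^(degF F m))%R.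
Proof.
rewrite {1}/theta /mmap; apply: eq_bigr => m _.
rewrite -/(theta F) (_ : mmap1 _ m = theta F 'X_[m]); last by rewrite /theta mmapX.
by rewrite theta_X /= mulrA -rmorphM /= mul_mpolyC.
Qed.

Lemma theta_coef F p k : ((theta F p)`_k == 0)%R = ~~ has (fun m => degF F m == k) (msupp p).
Proof.
rewrite theta_E coef_sum.
under eq_bigr do rewrite coefCM coefXn mulr_natr.
have [hm|hm] := boolP (has _ _); last first.
  rewrite big1_seq ?eqxx // => m /andP [_ mp].
  have : degF F m != k by apply: contra hm => e; apply/hasP; exists m.
  by rewrite eq_sym => /negbTE ->.
case/hasP: hm => m0 hm0 /eqP dm0 /=; apply/negbTE; apply/eqP => h.
have := congr1 (mcoeff m0) h; rewrite raddf_sum /= (bigD1_seq m0) //= ?msupp_uniq //.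
rewrite dm0 eqxx mulr1n mcoeffZ mcoeffX eqxx mulr1 big1_seq.
  rewrite addr0 mcoeff0; apply/eqP; by rewrite -mcoeff_msupp.
move=> m /andP [mm0 _]; case: (k == degF F m); rewrite ?mulr1n ?mulr0n ?mcoeff0 //.
by rewrite mcoeffZ mcoeffX (negbTE mm0) mulr0.
Qed.

Lemma M4 F s g f : ~~ QF F 1 g -> ~~ QF F s f -> ~~ QF F s (g * f)%R.
Proof.
rewrite /QF /monob -!has_predC => /hasP [m0 hm0 /= d0] /hasP [m1 hm1 /= d1].
have g0 : ((theta F g)`_0 != 0)%R.
  rewrite theta_coef negbK; apply/hasP; exists m0 => //.
  by move: d0; rewrite /= -ltnNge ltnS leqn0.
have ex : exists k, ((theta F f)`_k != 0)%R.
  by exists (degF F m1); rewrite theta_coef negbK; apply/hasP; exists m1.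
pose k0 := ex_minn ex.
have fk0 : ((theta F f)`_k0 != 0)%R by rewrite /k0; case: ex_minnP.
have mk0 : forall i, ((theta F f)`_i != 0)%R -> k0 <= i by rewrite /k0; case: ex_minnP.
clearbody k0.
have k0s : k0 < s.
  apply: leq_ltn_trans (mk0 (degF F m1) _) _; last by move: d1; rewrite /= -ltnNge.
  by rewrite theta_coef negbK; apply/hasP; exists m1.
have : ((theta F (g * f))`_k0 != 0)%R.
  rewrite thetaM coefM big_ord_recl subn0 big1; first by rewrite addr0 mulf_neq0.
move=> i _.
  have : ~~ ((theta F f)`_(k0 - lift ord0 i) != 0)%R.
    apply/negP => /mk0; rewrite lift0 => h.
    have hi := ltn_ord i.
    move: h; rewrite leqNgt => /negP; apply.
    by rewrite ltn_subrL /=; apply: leq_ltn_trans (leq0n i) hi.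
  move=> h; apply/eqP; rewrite mulf_eq0; apply/orP; right; exact/negPn.
rewrite theta_coef negbK => /hasP [m hm /eqP dm]; apply/hasP; exists m => //=.
by rewrite -ltnNge dm.
Qed.

End Alg.




Section Main.
Variables (K : fieldType) (n : nat).
Local Notation S := {mpoly K[n]}.

Lemma QF0 F s : @QF K n F s 0.
Proof. by rewrite /QF /monob msupp0. Qed.

Lemma QF_add F s (a b : S) : QF F s a -> QF F s b -> QF F s (a + b)%R.
Proof.
move=> /allP ha /allP hb; apply/allP => m /msuppD_le; rewrite mem_cat => /orP[/ha|/hb] //.
Qed.

Lemma QF_mulr F s (a f : S) : QF F s f -> QF F s (a * f)%R.
Proof.
move=> /allP hf; apply/allP => m /msuppM_le /allpairsP [[m1 m2] /= [_ h2 ->]].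
rewrite degFD; have := hf m2 h2; rewrite /=; lia.
Qed.

Lemma QF_mull F s (a f : S) : QF F s a -> QF F s (a * f)%R.
Proof. by rewrite mulrC; apply: QF_mulr. Qed.

Lemma QF_X F s m : @QF K n F s 'X_[m] = (s <= degF F m).
Proof. by rewrite /QF /monob msuppX /= andbT. Qed.

Lemma degF0 F : @degF n F 0%MM = 0.
Proof. by rewrite /degF big1 // => i _; rewrite mnm0E. Qed.

Lemma degF_ge F (m : 'X_{1..n}) (k : 'I_n) : k.+1 \in F -> m k <= degF F m.
Proof. by move=> hk; rewrite /degF (bigD1 k) //= leq_addr. Qed.

Lemma QF_XM F s m (g : S) :
  QF F s (g * 'X_[m])%R = all (fun m' => s <= degF F m + degF F m') (msupp g).
Proof.
rewrite /QF /monob (perm_all _ (msuppMX g m)) all_map; apply: eq_all => m' /=.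
by rewrite degFD.
Qed.

End Main.

Theorem corollary2p8 (K : fieldType) (n t : nat) :
  (2 <= t <= n)%N ->
  forall s : nat, (1 <= s)%N ->
  forall P : {mpoly K[n]} -> Prop,
    is_ass (ideal_pow (@path_ideal K n t) s) P <->
    exists F : seq nat, in_C n t F /\ (forall g, P g <-> @prime_of K n F g).
Proof.
move=> htn s s1 P.
have tn : 1 <= t <= n by lia.
have t1 : 1 <= t by lia.
have JC := @J_char K n t tn s.
split.
  move=> [[P0 PD PM P1 Pp] [f Pf]].
  have Pexp : forall x k, P (x ^+ k)%R -> P x.
    move=> x; elim => [|k IH]; first by rewrite expr0 => /P1.
    by rewrite exprS => /Pp [//|/IH].
  have [my [nPy hy]] : exists my : 'X_{1..n}, ~ P 'X_[my] /\
      forall k : 'I_n, ~ P 'X_k -> s <= my k.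
    suff : forall l : seq 'I_n, exists my : 'X_{1..n}, ~ P 'X_[my] /\
        forall k : 'I_n, k \in l -> ~ P 'X_k -> s <= my k.
      move=> /(_ (enum 'I_n)) [my [h1 h2]]; exists my; split => // k.
      by apply: h2; rewrite mem_enum.
    elim => [|k l [my [h1 h2]]].
      by exists 0%MM; split => //; rewrite mpolyX0.
    have [Pk|nPk] := classic (P 'X_k).
      exists my; split => // k'; rewrite inE => /orP [/eqP -> //|]; exact: h2.
    exists (my + U_(k) *+ s)%MM; split.
      by rewrite mpolyXD -mpolyXn => /Pp [//|/Pexp].
    move=> k' hk' nk'; rewrite mnmDE mulmnE mnmE.
    have [e|ne] := eqVneq k k'.
      by rewrite -e mul1n leq_addl.
    move: hk'; rewrite inE eq_sym (negbTE ne) /= => hk'.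
    have := h2 k' hk' nk'; lia.
  have [F [hF [nQ PF]]] : exists F, in_C n t F /\ ~~ QF F s f /\
      forall i, i \in F -> P (@xvar K n i).
    apply: NNPP => hn; apply: nPy; apply/Pf; apply/JC => G hG.
    have [hQ|hQ] := boolP (QF G s f); first exact: QF_mulr.
    have [i [iG nPi]] : exists i, i \in G /\ ~ P (@xvar K n i).
      apply: NNPP => hi; apply: hn; exists G; split => //; split => //.
      by move=> i iG; apply: NNPP => nPi; apply: hi; exists i.
    apply: QF_mull; rewrite QF_X.
    have [[_ rG _ _ _] _] := proj1 (inCE _ _ _) hG.
    have ir := rG i iG.
    have ik : i.-1 < n by lia.
    have ei : i = (Ordinal ik).+1 by rewrite /=; lia.
    rewrite ei xvarE in nPi; rewrite ei in iG.
    exact: leq_trans (hy _ nPi) (degF_ge _ iG).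
  have [[_ rF _ _ _] _] := proj1 (inCE _ _ _) hF.
  exists F; split => // g; split.
    move=> Pg; apply/(prime_char tn _ rF); apply: contraT => nq.
    have := M4 nq nQ; have := proj1 (JC _) (proj1 (Pf g) Pg) F hF.
    by move=> ->.
  apply: (ig_sub P0 PD PM).
  by move=> h [i [iF ->]]; apply: PF.
move=> [F [hF PF]].
have hF' := proj1 (inCE _ _ _) hF.
have [[sF rF szF h1F _] _] := hF'.
have PQ : forall g, P g <-> QF F 1 g.
  by move=> g; rewrite -(prime_char tn g rF); exact: PF.
split.
  split.
  - by apply/PQ; apply: QF0.
  - by move=> a b /PQ ha /PQ hb; apply/PQ; apply: QF_add.
  - by move=> a b /PQ hb; apply/PQ; apply: QF_mulr.
  - by move/PQ; rewrite -mpolyX0 QF_X degF0.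
  - move=> a b /PQ hab; rewrite !PQ; apply: NNPP => h.
    have na : ~~ QF F 1 a by apply/negP => ha; apply: h; left.
    have nb : ~~ QF F 1 b by apply/negP => hb; apply: h; right.
    by have := M4 na nb; rewrite hab.
pose N0 := nth 0 F 0.
pose m0 : 'X_{1..n} :=
  [multinom (if k.+1 \in F then (if k.+1 == N0 then s.-1 else 0) else s) | k < n].
have N0F : N0 \in F by apply: mem_nth.
have N0r := rF _ N0F.
have k0n : N0.-1 < n by lia.
pose k0 := Ordinal k0n.
have ek0 : k0.+1 = N0 by rewrite /=; lia.
have dF : degF F m0 = s.-1.
  rewrite /degF (bigD1 k0) /=; last by rewrite ek0.
  rewrite mnmE ek0 N0F eqxx big1 ?addn0 // => k /andP [kF kk0].
  rewrite mnmE kF; case: eqP => // e; exfalso; move/eqP: kk0; apply; apply: val_inj.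
  by rewrite /= -e; lia.
have dG : forall G, in_C n t G -> G <> F -> s <= degF G m0.
  move=> G hG nGF; have hG' := proj1 (inCE _ _ _) hG.
  have [[_ rG _ _ _] _] := hG'.
  have : ~~ all (mem F) G.
    by apply/negP => /allP sub; apply: nGF; apply: inC_unique t1 hF' hG' sub.
  rewrite -has_predC => /hasP [j jG /= jF].
  have jr := rG j jG; have jk : j.-1 < n by lia.
  have ej : (Ordinal jk).+1 = j by rewrite /=; lia.
  apply: leq_trans (degF_ge m0 (k := Ordinal jk) _); last by rewrite ej.
  by rewrite mnmE ej (negbTE jF).
exists 'X_[m0] => g; rewrite PQ JC; split.
  move=> /allP hg G hG; rewrite QF_XM; apply/allP => m hm.
  have [e|ne] := eqVneq G F.
    by rewrite e dF; have := hg m hm; rewrite /=; lia.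
  have := dG G hG (elimN eqP ne); lia.
move=> /(_ F hF); rewrite QF_XM dF => /allP h; apply/allP => m hm.
have := h m hm; rewrite /=; lia.
Qed.
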